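(* Let $H$ be a component of $G[\overline{C}]$, and let $v_1,v_2$ be the unique neighbors in $H$ of $x_1,x_2$ respectively. Then $H$ is a $v_1,v_2$-path.
   Context: All graphs are simple. $\mathcal{G}^*$ denotes the class of graphs in which any two distinct odd cycles share at most one edge. Standing setting: $G\in\mathcal{G}^*$ is $2$-connected, and $C$ is a longest odd cycle of $G$ with $|C|\ge 5$. We also write $C$ for its vertex set. Let $\overline{C}=V(G)\setminus C$, assumed nonempty. For $v\in\overline{C}$ and $w\in C$, $v$ touches $w$ if there is a $v,w$-path meeting $C$ only at $w$. $T(v)=\{w\in C: v \text{ touches } w\}$. In this setting, $T(v)$ is the same set for all $v\in\overline{C}$; this set is $\{x_1,x_2\}$ for two adjacent vertices $x_1,x_2$ of $C$. Moreover, each of $x_1,x_2$ has exactly one neighbor in each component of $G[\overline{C}]$. *)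

(* Defs.v *)
From mathcomp Require Import all_boot.
Set Implicit Arguments. Unset Strict Implicit. Unset Printing Implicit Defensive.

(* A simple graph: vertex type T : finType, adjacency e : rel T,
   assumed symmetric and irreflexive in the theorem. *)

Definition is_cycle (T : finType) (e : rel T) (c : seq T) : bool :=
  [&& uniq c, 3 <= size c & cycle e c].

Definition is_odd_cycle (T : finType) (e : rel T) (c : seq T) : bool :=
  is_cycle e c && odd (size c).

(* Edge set of a cycle, as a symmetric set of ordered pairs
   (each undirected edge {x,y} appears as (x,y) and (y,x)). *)
Definition cycle_edges (T : finType) (c : seq T) : {set T * T} :=
  [set p | [&& p.1 \in c, p.2 \in c & (next c p.1 == p.2) || (next c p.2 == p.1)]].

(* Class G*: any two distinct odd cycles share at most one (undirected) edge. *)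
Definition in_Gstar (T : finType) (e : rel T) : Prop :=
  forall c1 c2 : seq T, is_odd_cycle e c1 -> is_odd_cycle e c2 ->
    cycle_edges c1 != cycle_edges c2 ->
    #|cycle_edges c1 :&: cycle_edges c2| <= 2.

Definition connected_in (T : finType) (e : rel T) (S : {set T}) : Prop :=
  forall x y, x \in S -> y \in S ->
    connect [rel u v | [&& e u v, u \in S & v \in S]] x y.

Definition two_connected (T : finType) (e : rel T) : Prop :=
  [/\ 3 <= #|T|, connected_in e setT & forall v : T, connected_in e [set~ v]].

Definition longest_odd_cycle (T : finType) (e : rel T) (C : seq T) : Prop :=
  is_odd_cycle e C /\ forall c, is_odd_cycle e c -> size c <= size C.

Definition touches (T : finType) (e : rel T) (C : seq T) (v w : T) : Prop :=
  [/\ v \notin C, w \in C &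
    exists p : seq T, [&& path e v p, uniq (v :: p), last v p == w
                        & all (fun x => x \notin C) (belast v p)]].

Definition component_off (T : finType) (e : rel T) (C : seq T) (H : {set T}) : Prop :=
  [/\ H != set0, forall x, x \in H -> x \notin C, connected_in e H &
      forall x y, x \in H -> y \notin C -> e x y -> y \in H].

Definition seq_adj (T : eqType) (s : seq T) (x y : T) : bool :=
  [&& x \in s, y \in s &
     (index y s == (index x s).+1) || (index x s == (index y s).+1)].

Definition is_path_between (T : finType) (e : rel T) (H : {set T}) (a b : T) : Prop :=
  exists s : seq T,
    [/\ s != [::], uniq s, forall x, (x \in s) = (x \in H),
        head a s = a /\ last b s = b &
        forall x y, x \in H -> y \in H -> e x y = seq_adj s x y].

(* Main.v *)
Require Import Defs.
From mathcomp Require Import all_boot.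

Module Aux.
Set Implicit Arguments. Unset Strict Implicit. Unset Printing Implicit Defensive.

Section Gen.
Variable T : eqType.

Lemma next_mid (s1 s2 : seq T) u w :
  uniq (s1 ++ u :: w :: s2) -> next (s1 ++ u :: w :: s2) u = w.
Proof.
move=> U; rewrite -(next_rot (size s1) U) rot_size_cat /= eqxx //.
Qed.

Lemma next_wrap (s : seq T) u w :
  uniq (u :: s ++ [:: w]) -> next (u :: s ++ [:: w]) w = u.
Proof.
move=> U; change (u :: s ++ [:: w]) with ((u :: s) ++ [:: w]) in U |- *.
rewrite -(next_rot (size (u :: s)) U) rot_size_cat /= eqxx //.
Qed.

Lemma boundary (R : rel T) (P : pred T) a p :
  path R a p -> ~~ P a -> P (last a p) ->
  exists q w, [/\ path R a q, all (predC P) (a :: q), P w & R (last a q) w].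
Proof.
elim: p a => [|y p IH] a /=; first by move=> _ /negbTE ->.
case/andP=> Ray Pp nPa Pl.
case Py: (P y).
  by exists [::], y; split => //=; rewrite andbT.
have [q [w [Pq Aq Pw Ruw]]] := IH y Pp (negbT Py) Pl.
exists (y :: q), w; split => //=.
  by rewrite Ray.
by rewrite nPa.
Qed.

Lemma perm_mid (A M R : seq T) a :
  perm_eq (A ++ a :: M ++ R) (M ++ A ++ a :: R).
Proof. by rewrite -[a :: M ++ R]cat1s catA perm_catCA -catA. Qed.

End Gen.

Section Fin.
Variable T : finType.

Lemma card3 (A : {set T}) a b c :
  a \in A -> b \in A -> c \in A -> a != b -> a != c -> b != c -> 2 < #|A|.
Proof.
move=> Ha Hb Hc ab ac bc.
have S : a |: [set b; c] \subset A.
  by apply/subsetP => z; rewrite !inE => /orP[|/orP[]] /eqP->.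
apply: leq_trans (subset_leq_card S).
by rewrite cardsU1 cards2 !inE negb_or ab ac bc.
Qed.

Lemma edges_vertex (c1 c2 : seq T) z :
  z \in c1 -> z \notin c2 -> cycle_edges c1 != cycle_edges c2.
Proof.
move=> z1 z2; apply/eqP => E.
have : (z, next c1 z) \in cycle_edges c1 by rewrite inE /= z1 mem_next z1 eqxx.
by rewrite E inE /= (negbTE z2).
Qed.

End Fin.

Section Edges.
Variable T : finType.

Lemma edge_mid (s1 s2 : seq T) u w :
  uniq (s1 ++ u :: w :: s2) ->
  ((u, w) \in cycle_edges (s1 ++ u :: w :: s2)) &&
  ((w, u) \in cycle_edges (s1 ++ u :: w :: s2)).
Proof.
move=> U; rewrite !inE /= next_mid // eqxx !mem_cat !inE !eqxx !orbT.
done.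
Qed.

Lemma edge_wrap (s : seq T) u w :
  uniq (u :: s ++ [:: w]) ->
  ((w, u) \in cycle_edges (u :: s ++ [:: w])) &&
  ((u, w) \in cycle_edges (u :: s ++ [:: w])).
Proof.
move=> U; rewrite !inE (next_wrap U) /= eqxx !mem_cat !inE !eqxx !orbT.
done.
Qed.

End Edges.

Section Main.
Variables (T : finType) (e : rel T).
Hypothesis esym : symmetric e.
Hypothesis eirr : irreflexive e.
Hypothesis Gs : in_Gstar e.

Lemma shared3 c1 c2 p q r :
  is_odd_cycle e c1 -> is_odd_cycle e c2 ->
  p \in cycle_edges c1 -> q \in cycle_edges c1 -> r \in cycle_edges c1 ->
  p \in cycle_edges c2 -> q \in cycle_edges c2 -> r \in cycle_edges c2 ->
  p != q -> p != r -> q != r -> cycle_edges c1 = cycle_edges c2.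
Proof.
move=> o1 o2 p1 q1 r1 p2 q2 r2 pq pr qr.
case: (eqVneq (cycle_edges c1) (cycle_edges c2)) => [//|ne]; have := Gs o1 o2 ne.
have := card3 (A := cycle_edges c1 :&: cycle_edges c2) (a := p) (b := q) (c := r).
rewrite !in_setI p1 p2 q1 q2 r1 r2 => /(_ isT isT isT pq pr qr).
by rewrite ltnNge => /negP.
Qed.

Lemma L1 x y A B : is_odd_cycle e (x :: A ++ y :: B) -> A != [::] -> B != [::] ->
  odd (size A) -> e y x -> False.
Proof.
case: A => [//|a A']; case: B => [//|b B'] oc _ _ oA eyx.
set c := x :: (a :: A') ++ y :: b :: B'.
have /andP[/and3P[Uc _ Cc] _] : is_odd_cycle e c := oc.
set c1 := x :: (a :: A') ++ [:: y].
have Ec : c = c1 ++ b :: B' by rewrite /c /c1 /= -catA.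
have Uc1 : uniq c1 by move: Uc; rewrite Ec cat_uniq => /andP[].
have bc1 : b \notin c1.
  by move: Uc; rewrite Ec cat_uniq => /and3P[_ /hasPn /(_ b) H _]; apply: H; rewrite inE eqxx.
have oc1 : is_odd_cycle e c1.
  rewrite /is_odd_cycle /is_cycle Uc1 /=.
  move: Cc; rewrite /c /= !rcons_path !cat_path /=.
  case/and3P=> -> /and4P[-> -> _ _] _.
  rewrite last_cat /= eyx size_cat addn1 /= negbK.
  by move: oA => /=.
have ne : cycle_edges c != cycle_edges c1.
  by apply: (edges_vertex (z := b)) => //; rewrite /c !inE mem_cat !inE eqxx !orbT.
set l := last a A'.
have Ec2 : c = (x :: belast a A') ++ l :: y :: b :: B'.
  by rewrite /c /l [a :: A']lastI cat_rcons.
have Ec12 : c1 = (x :: belast a A') ++ l :: y :: [::].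
  by rewrite /c1 /l [a :: A']lastI cat_rcons.
have ya : y != a.
  by apply/eqP => ya; move: Uc; rewrite /c /= mem_cat !inE ya eqxx !orbT andbF.
have xy : x != y by apply/eqP => xy; move: eyx; rewrite xy eirr.
have xa : x != a by apply/eqP => xa; move: Uc; rewrite /c /= xa inE eqxx.
have E1 : (x, a) \in cycle_edges c.
  by have /andP[] := edge_mid (s1 := [::]) (u := x) (w := a) (s2 := A' ++ y :: b :: B') Uc.
have E2 : (a, x) \in cycle_edges c.
  by have /andP[] := edge_mid (s1 := [::]) (u := x) (w := a) (s2 := A' ++ y :: b :: B') Uc.
have E3 : (l, y) \in cycle_edges c.
  by have := @edge_mid _ (x :: belast a A') (b :: B') l y; rewrite -Ec2 => /(_ Uc) /andP[].
have F1 : (x, a) \in cycle_edges c1.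
  by have /andP[] := edge_mid (s1 := [::]) (u := x) (w := a) (s2 := A' ++ [:: y]) Uc1.
have F2 : (a, x) \in cycle_edges c1.
  by have /andP[] := edge_mid (s1 := [::]) (u := x) (w := a) (s2 := A' ++ [:: y]) Uc1.
have F3 : (l, y) \in cycle_edges c1.
  by have := @edge_mid _ (x :: belast a A') [::] l y; rewrite -Ec12 => /(_ Uc1) /andP[].
move/eqP: ne; apply; apply: (shared3 (p := (x, a)) (q := (a, x)) (r := (l, y))) => //.
- by rewrite xpair_eqE negb_and xa.
- by rewrite xpair_eqE negb_and [a == y]eq_sym ya orbT.
- by rewrite xpair_eqE negb_and xy orbT.
Qed.


Lemma rot_odd n c : is_odd_cycle e (rot n c) = is_odd_cycle e c.
Proof. by rewrite /is_odd_cycle /is_cycle rot_uniq size_rot rot_cycle. Qed.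

Lemma rotr_odd n c : is_odd_cycle e (rotr n c) = is_odd_cycle e c.
Proof. by rewrite /is_odd_cycle /is_cycle rotr_uniq size_rotr rotr_cycle. Qed.

Lemma rev_odd c : is_odd_cycle e (rev c) = is_odd_cycle e c.
Proof.
rewrite /is_odd_cycle /is_cycle rev_uniq size_rev rev_cycle.
by rewrite (@eq_cycle _ _ e) // => u v; rewrite esym.
Qed.

Lemma consec C x1 x2 : is_odd_cycle e C -> x1 \in C -> x2 \in C -> e x1 x2 ->
  exists B, [/\ is_odd_cycle e (x1 :: x2 :: B), size (x1 :: x2 :: B) = size C
             & {subset x1 :: x2 :: B <= C}].
Proof.
move=> oC x1C x2C e12.
have [i r Er] := rot_to x1C.
have oc : is_odd_cycle e (x1 :: r) by rewrite -Er rot_odd.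
have mc : {subset x1 :: r <= C} by move=> z; rewrite -Er mem_rot.
have sc : size (x1 :: r) = size C by rewrite -Er size_rot.
have x12 : x1 != x2 by apply/eqP => E; move: e12; rewrite E eirr.
have x2r : x2 \in r by move: x2C; rewrite -(mem_rot i) Er inE eq_sym (negbTE x12).
case: (splitPr x2r) oc mc sc => A B oc mc sc.
case: A oc mc sc => [|a A] oc mc sc; first by exists B.
case: B oc mc sc => [|b B] oc mc sc.
  exists (rev (a :: A)).
  have Ec : x1 :: x2 :: rev (a :: A) = rotr 1 (rev (x1 :: (a :: A) ++ [:: x2])).
    have -> : rev (x1 :: (a :: A) ++ [:: x2]) = rcons (x2 :: rev (a :: A)) x1.
      by rewrite (rev_cons x1) rev_cat.
    by rewrite rotr1_rcons.
  rewrite Ec rotr_odd rev_odd size_rotr size_rev; split => // z.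
  by rewrite mem_rotr mem_rev => /mc.
exfalso.
have /andP[_ oddc] := oc.
case oA: (odd (size (a :: A))).
  by apply: (L1 oc) => //; rewrite esym.
have oc2 : is_odd_cycle e (x2 :: (b :: B) ++ x1 :: (a :: A)).
  by move: oc; rewrite -(rot_odd (size (x1 :: a :: A))) (rot_size_cat (x1 :: a :: A)).
apply: (L1 oc2) => //.
move: oddc; rewrite /= size_cat /= addnS /=.
move: oA => /=; rewrite addnS /= oddD.
by case: (odd (size A)); case: (odd (size B)).
Qed.

End Main.

Section Main2.
Variables (T : finType) (e : rel T) (C : seq T) (x1 x2 : T) (H : {set T}) (v1 v2 : T).
Hypothesis esym : symmetric e.
Hypothesis eirr : irreflexive e.
Hypothesis Gs : in_Gstar e.
Hypothesis lC : longest_odd_cycle e C.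
Hypothesis x1C : x1 \in C.
Hypothesis x2C : x2 \in C.
Hypothesis e12 : e x1 x2.
Hypothesis Ht : forall v w, v \notin C -> w \in C -> touches e C v w <-> (w = x1 \/ w = x2).
Hypothesis Hc : component_off e C H.
Hypothesis tc : two_connected e.
Hypothesis v1H : v1 \in H.
Hypothesis e1 : e x1 v1.
Hypothesis u1 : forall u, u \in H -> e x1 u -> u = v1.
Hypothesis v2H : v2 \in H.
Hypothesis e2 : e x2 v2.
Hypothesis u2 : forall u, u \in H -> e x2 u -> u = v2.

Lemma HC x : x \in H -> x \notin C.
Proof. by case: Hc => _ HC _ _; apply: HC. Qed.

Lemma F1 h w : h \in H -> w \in C -> e h w -> w = x1 \/ w = x2.
Proof.
move=> hH wC ehw; apply/(Ht (HC hH) wC); split => //; first exact: HC.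
have hw : h != w by apply/eqP => E; move: wC; rewrite -E (negbTE (HC hH)).
exists [:: w]; rewrite /= ehw inE hw eqxx /= andbT.
exact: HC.
Qed.

Lemma Fa h : h \in H -> e h x1 -> h = v1.
Proof. by move=> hH ehx; apply: u1; rewrite // esym. Qed.

Lemma Fb h : h \in H -> e h x2 -> h = v2.
Proof. by move=> hH ehx; apply: u2; rewrite // esym. Qed.

Lemma x1H : x1 \notin H.
Proof. by apply/negP => /HC; rewrite x1C. Qed.

Lemma x2H : x2 \notin H.
Proof. by apply/negP => /HC; rewrite x2C. Qed.

Lemma x12 : x1 != x2.
Proof. by apply/eqP => E; move: e12; rewrite E eirr. Qed.

Definition good (s : seq T) :=
  [&& path e x1 s, uniq s, all (fun z => z \in H) s, s != [::] & e (last x1 s) x2].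

Lemma good_sub s : good s -> {subset s <= H}.
Proof. by case/and5P => _ _ /allP. Qed.

Lemma good_head s : good s -> exists t, s = v1 :: t.
Proof.
case: s => [|h t] /and5P[P _ /allP A //] _; exists t.
by rewrite (Fa (A h (mem_head _ _))) // esym; case/andP: P.
Qed.

Lemma good_last s : good s -> last x1 s = v2 /\ v2 \in s.
Proof.
case: s => [|h t] G; first by case/and5P: G.
have /and5P[_ _ /allP A _ E] := G.
have L : last x1 (h :: t) \in h :: t by rewrite /= mem_last.
have -> : last x1 (h :: t) = v2 by apply: Fb => //; apply: A.
by split => //; rewrite -(Fb (A _ L) E).
Qed.


Lemma good_odd s : good s -> odd (size s).
Proof.
move=> G; have [B [oB sB mB]] := consec esym eirr Gs lC.1 x1C x2C e12.
apply/negPn/negP => ev.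
have sH := good_sub G.
have /and5P[Ps Us _ ns Ls] := G.
have /andP[/and3P[UB _ CB] oddB] := oB.
set c := x1 :: s ++ x2 :: B.
have nsC z : z \in s -> z \notin C by move/sH/HC.
have x1s : x1 \notin s by apply/negP => /nsC; rewrite x1C.
have x1B : x1 \notin x2 :: B by case/andP: UB.
have UB' : uniq (x2 :: B) by case/andP: UB.
have dj : ~~ has (mem s) (x2 :: B).
  apply/hasPn => z zC; apply/negP => /nsC.
  by rewrite mB // inE zC orbT.
have Uc : uniq c by rewrite /c cons_uniq mem_cat negb_or x1s x1B cat_uniq Us UB' dj.
have Sc : 3 <= size c by rewrite /c /= size_cat /= addnS !ltnS addn_gt0 lt0n size_eq0 ns.
have Cc : cycle e c.
  move: CB; rewrite /c /= rcons_cat cat_path /= => /andP[_ ->].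
  by rewrite Ps Ls.
have Oc : odd (size c).
  move: oddB ev; rewrite /c /= size_cat /= addnS /= oddD.
  by case: (odd (size s)); case: (odd (size B)).
have oc : is_odd_cycle e c by rewrite /is_odd_cycle /is_cycle Uc Sc Cc Oc.
have := lC.2 _ oc; rewrite -sB /c /= size_cat /= addnS ltnS ltnS.
rewrite -[X in _ <= X]add0n leq_add2r leqn0 size_eq0.
by rewrite (negbTE ns).
Qed.

Lemma good_cycle s : good s -> is_odd_cycle e (x1 :: s ++ [:: x2]).
Proof.
move=> G; have sH := good_sub G.
have /and5P[Ps Us _ ns Ls] := G.
have Uc : uniq (x1 :: s ++ [:: x2]).
  rewrite cons_uniq mem_cat negb_or inE (negbTE x12) /= cat_uniq Us /= orbF andbT.
  have a1 : x1 \notin s by apply/negP => /sH; rewrite (negbTE x1H).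
  have a2 : x2 \notin s by apply/negP => /sH; rewrite (negbTE x2H).
  by rewrite a1 a2.
have Sc : 3 <= size (x1 :: s ++ [:: x2]) by rewrite /= size_cat /= addn1 !ltnS lt0n size_eq0.
have Cc : cycle e (x1 :: s ++ [:: x2]) by rewrite /= rcons_cat cat_path /= Ps Ls esym e12.
have Oc : odd (size (x1 :: s ++ [:: x2])) by rewrite /= size_cat addn1 /= negbK (good_odd G).
by rewrite /is_odd_cycle /is_cycle Uc Sc Cc Oc.
Qed.

Lemma U s s' : good s -> good s' -> {subset s <= s'}.
Proof.
move=> G G'.
have [t Et] := good_head G; have [t' Et'] := good_head G'.
have oD := good_cycle G; have oD' := good_cycle G'.
have /andP[/and3P[UD _ _] _] := oD; have /andP[/and3P[UD' _ _] _] := oD'.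
have EE : cycle_edges (x1 :: s ++ [:: x2]) = cycle_edges (x1 :: s' ++ [:: x2]).
  have m1 := @edge_mid _ [::] (t ++ [:: x2]) x1 v1.
  have m2 := @edge_mid _ [::] (t' ++ [:: x2]) x1 v1.
  have w1 := @edge_wrap _ s x1 x2 UD.
  have w2 := @edge_wrap _ s' x1 x2 UD'.
  rewrite Et /= in m1 w1 UD; rewrite Et' /= in m2 w2 UD'.
  have /andP[A1 B1] := m1 UD; have /andP[A2 B2] := m2 UD'.
  have /andP[C1 _] := w1; have /andP[C2 _] := w2.
  rewrite Et Et'.
  apply: (shared3 Gs (p := (x1, v1)) (q := (v1, x1)) (r := (x2, x1))) => //.
  - by rewrite -Et good_cycle.
  - by rewrite -Et' good_cycle.
  - rewrite xpair_eqE negb_and; apply/orP; left; apply/eqP => E.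
    by move: x1H; rewrite E v1H.
  - by rewrite xpair_eqE negb_and x12.
  - rewrite xpair_eqE negb_and; apply/orP; left; apply/eqP => E.
    by move: x2H; rewrite -E v1H.
move=> z zs; case: (boolP (z \in x1 :: s' ++ [:: x2])) => [|nz].
  rewrite inE mem_cat inE => /orP[/eqP E|/orP[//|/eqP E]].
  - by move: x1H; rewrite -E (good_sub G zs).
  - by move: x2H; rewrite -E (good_sub G zs).
have := edges_vertex (c1 := x1 :: s ++ [:: x2]) (c2 := x1 :: s' ++ [:: x2]) (z := z).
by rewrite inE mem_cat zs orbT => /(_ isT nz); rewrite EE eqxx.
Qed.


Lemma Surg A a M b B E :
  good (A ++ a :: M ++ b :: B) -> path e a (rcons E b) -> uniq E -> {subset E <= H} ->
  (forall z, z \in E -> z \notin A ++ a :: M ++ b :: B) -> M = [::] /\ E = [::].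
Proof.
move=> G PE UE EH dj.
set s := A ++ a :: M ++ b :: B in G dj.
set R := A ++ a :: b :: B.
have pM : perm_eq s (M ++ R) := perm_mid A M (b :: B) a.
have pE : perm_eq (A ++ a :: E ++ b :: B) (E ++ R) := perm_mid A E (b :: B) a.
have /and5P[Ps Us As _ Ls] := G.
have UR : uniq R by move: Us; rewrite (perm_uniq pM) cat_uniq => /and3P[].
have Rs : {subset R <= s} by move=> z zR; rewrite (perm_mem pM) mem_cat zR orbT.
set s' := A ++ a :: E ++ b :: B in pE.
have G' : good s'.
  apply/and5P; split.
  - move: Ps; rewrite /s !cat_path /= cat_path /=.
    case/and5P=> -> -> _ _ Pb.
    by rewrite -cat_rcons cat_path last_rcons PE Pb.
  - rewrite (perm_uniq pE) cat_uniq UE UR andbT.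
    apply/hasPn => z zR; apply/negP => zE.
    by have := dj z zE; rewrite Rs.
  - apply/allP => z; rewrite (perm_mem pE) mem_cat => /orP[/EH // | /Rs].
    by move/allP: As; apply.
  - by rewrite /s'; case: (A).
  - have -> : s' = (A ++ a :: E) ++ b :: B by rewrite /s' -catA.
    move: Ls; have -> : s = (A ++ a :: M) ++ b :: B by rewrite /s -catA.
    by rewrite !last_cat.
have Ss' := U G G'; have S's := U G' G.
have noM : forall m, m \in M -> False.
  move=> m mM; have ms : m \in s by rewrite (perm_mem pM) mem_cat mM.
  have := Ss' m ms; rewrite (perm_mem pE) mem_cat => /orP[/dj|mR]; first by rewrite ms.
  by move: Us; rewrite (perm_uniq pM) cat_uniq => /and3P[_ /hasPn /(_ m mR) /=]; rewrite mM.
have noE : forall m, m \in E -> False.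
  move=> m mE; have ms' : m \in s' by rewrite (perm_mem pE) mem_cat mE.
  by have := dj m mE; rewrite S's.
split; [case: (M) noM | case: (E) noE] => // m ? /(_ m); rewrite inE eqxx => /(_ isT) [].
Qed.

Lemma Surg' A a M b B E :
  good (A ++ a :: M ++ b :: B) -> path e b (rcons E a) -> uniq E -> {subset E <= H} ->
  (forall z, z \in E -> z \notin A ++ a :: M ++ b :: B) -> M = [::] /\ E = [::].
Proof.
move=> G PE UE EH dj.
have := Surg (E := rev E) G.
have -> : path e a (rcons (rev E) b) = path e b (rcons E a).
  rewrite -rev_cons -(belast_rcons b E a) -{1}(last_rcons b E a) rev_path.
  by apply: eq_path => u v; rewrite esym.
rewrite rev_uniq => /(_ PE UE) [].
- by move=> z; rewrite mem_rev; apply: EH.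
- by move=> z; rewrite mem_rev; apply: dj.
by move=> -> /(f_equal rev); rewrite revK.
Qed.


Definition RH := [rel u v | [&& e u v, u \in H & v \in H]].

Lemma pathRH a q : path RH a q -> all (fun z => z \in H) q.
Proof. by elim: q a => //= y q IH a /andP[/and3P[_ _ ->] /IH]. Qed.

Lemma pathHC (R : rel T) a q : subrel R e -> path R a q -> a \in H ->
  all (fun y => y \notin C) q -> all (fun z => z \in H) q.
Proof.
move=> sR; elim: q a => //= y q IH a /andP[Ray Pq] aH /andP[yC Aq].
have yH : y \in H by case: Hc => _ _ _; apply; [exact: aH | exact: yC | exact: sR].
by rewrite yH (IH y).
Qed.

Lemma good_ex : exists s, good s.
Proof.
case: Hc => _ _ cH _.
have := cH v1 v2 v1H v2H; case/connectP => p Pp.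
move: Pp; rewrite -/RH => Pp.
case: (shortenP Pp) => p' Pp' Up' _ Lp.
exists (v1 :: p'); apply/and5P; split => //.
- rewrite /= e1 /=; by apply: sub_path Pp' => u v /and3P[].
- by rewrite /= v1H /=; apply: (pathRH Pp').
- by rewrite /= -Lp esym.
Qed.

Lemma cover s h : good s -> h \in H -> h \in s.
Proof.
move=> G hH; apply/negPn/negP => hs.
have sH := good_sub G.
have /and5P[Ps Us As ns Ls] := G.
have [t Et] := good_head G.
have [Lv2 v2s] := good_last G.
have v1s : v1 \in s by rewrite Et mem_head.
case: Hc => _ _ cH _.
have := cH h v1 hH v1H; case/connectP => p Pp Lp.
have Pl : last h p \in s by rewrite -Lp.
have [q [w [Pq Aq ws Rw]]] := boundary (P := fun y => y \in s) Pp hs Pl.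
set k := last h q in Rw.
have kq : k \in h :: q by apply: mem_last.
have ks : k \notin s by move/allP: Aq => /(_ k kq).
have /and3P[ekw kH wH] := Rw.
set p0 := w in ws wH ekw.
case: tc => _ _ /(_ p0) cp.
have kp : k \in [set~ p0] by rewrite !inE; apply/eqP => E; move: ks; rewrite E ws.
have xp : x1 \in [set~ p0] by rewrite !inE; apply/eqP => E; move: x1H; rewrite E wH.
have := cp k x1 kp xp; case/connectP => r Pr Lr.
set R' := [rel u v | [&& e u v, u \in [set~ p0] & v \in [set~ p0]]] in Pr.
have kC : k \notin C := HC kH.
have nPk : ~~ ((k \in s) || (k \in C)) by rewrite negb_or ks kC.
have Plr : (last k r \in s) || (last k r \in C) by rewrite -Lr x1C orbT.
have [q2 [z [Pq2 Aq2 Pz Rz]]] := boundary (P := fun y => (y \in s) || (y \in C)) Pr nPk Plr.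
move: Rz; case: (shortenP Pq2) => q3 Pq3 Uq3 sub3 Rz.
have Aq3 : all (fun y => ~~ ((y \in s) || (y \in C))) (k :: q3).
  apply/allP => y; rewrite inE => /orP[/eqP -> | /sub3 yq2].
    by rewrite negb_or ks kC.
  by move/allP: Aq2; apply; rewrite inE yq2 orbT.
have sR : subrel R' e by move=> u v /and3P[].
have Hq3 : all (fun z => z \in H) q3.
  apply: (pathHC sR Pq3 kH).
  by apply/allP => y yq; move/allP: Aq3 => /(_ y); rewrite inE yq orbT negb_or => /(_ isT) /andP[].
set u := last k q3 in Rz.
have uE : u \in k :: q3 by apply: mem_last.
have uH : u \in H by move: uE; rewrite inE => /orP[/eqP -> //|]; move/allP: Hq3; apply.
have us : u \notin s by move/allP: Aq3 => /(_ u uE); rewrite negb_or => /andP[].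
have /and3P[euz _] := Rz; rewrite !inE => zp.
have zs : z \in s.
  move: Pz => /orP[//|zC].
  case: (F1 uH zC euz) => E; move: euz; rewrite E => euz.
  - by move: us; rewrite (Fa uH euz) v1s.
  - by move: us; rewrite (Fb uH euz) v2s.
set E := k :: q3.
have PE : path e p0 (rcons E z).
  rewrite /E /= rcons_path -/u euz andbT (esym p0) ekw /=; by apply: (sub_path sR).
have EH : {subset E <= H}.
  by move=> y; rewrite inE => /orP[/eqP -> //|]; move/allP: Hq3; apply.
have dj : forall y, y \in E -> y \notin s.
  by move=> y yE; move/allP: Aq3 => /(_ y yE); rewrite negb_or => /andP[].
have [A [T' Es]] : exists A T', s = A ++ p0 :: T' by case/splitPr: ws => A T'; exists A, T'.
move: zs; rewrite Es mem_cat inE (negbTE zp) /= => /orP[] zs.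
- have [A' [M EA]] : exists A' M, A = A' ++ z :: M by case/splitPr: zs => A' M; exists A', M.
  have Es' : s = A' ++ z :: M ++ p0 :: T' by rewrite Es EA -catA.
  rewrite Es' in G dj.
  by have [_] := Surg' G PE Uq3 EH dj.
- have [M [B EA]] : exists M B, T' = M ++ z :: B by case/splitPr: zs => M B; exists M, B.
  rewrite Es EA in G dj.
  by have [_] := Surg G PE Uq3 EH dj.
Qed.


Lemma idx2 (A B : seq T) u w : uniq (A ++ u :: w :: B) ->
  index u (A ++ u :: w :: B) = size A /\ index w (A ++ u :: w :: B) = (size A).+1.
Proof.
rewrite cat_uniq => /and3P[_ hA /andP[uwB _]].
have uA : u \notin A by apply/negP => uA; move/hasPn: hA => /(_ u (mem_head _ _)); rewrite uA.
have wA : w \notin A.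
  by apply/negP => wA; move/hasPn: hA => /(_ w); rewrite !inE eqxx orbT wA => /(_ isT).
have uw : u != w by move: uwB; rewrite inE negb_or => /andP[].
rewrite !index_cat (negbTE uA) (negbTE wA) /= eqxx (negbTE uw) eqxx.
by rewrite addn0 addn1.
Qed.

Lemma Surg0 A a M b B : good (A ++ a :: M ++ b :: B) -> e a b -> M = [::].
Proof.
move=> G eab.
have P0 : path e a (rcons [::] b) by rewrite /= eab.
have S1 : {subset [::] <= H} by [].
have S2 : forall z, z \in [::] -> z \notin A ++ a :: M ++ b :: B by [].
by have [] := @Surg A a M b B [::] G P0 isT S1 S2.
Qed.

Lemma adj s x y : good s -> x \in H -> y \in H -> e x y = seq_adj s x y.
Proof.
move=> G xH yH.
have xs := cover G xH; have ys := cover G yH.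
have /and5P[Ps Us As ns Ls] := G.
apply/idP/idP.
  move=> exy.
  have xy : x != y by apply/eqP => E; move: exy; rewrite E eirr.
  have [A [T' Es]] : exists A T', s = A ++ x :: T' by case/splitPr: xs => A T'; exists A, T'.
  move: ys; rewrite Es mem_cat inE eq_sym (negbTE xy) /= => /orP[] ys.
  - have [A' [M EA]] : exists A' M, A = A' ++ y :: M by case/splitPr: ys => A' M; exists A', M.
    have Es' : s = A' ++ y :: M ++ x :: T' by rewrite Es EA -catA.
    have G' := G; rewrite Es' in G'.
    have M0 := Surg0 G' (etrans (esym y x) exy).
    rewrite M0 /= in Es'; rewrite Es' in Us.
    have [i1 i2] := idx2 Us.
    by rewrite -Es /seq_adj Es' i1 i2 !mem_cat !inE !eqxx !orbT.
  - have [M [B EA]] : exists M B, T' = M ++ y :: B by case/splitPr: ys => M B; exists M, B.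
    have G' := G; rewrite Es EA in G'.
    have M0 := Surg0 G' exy.
    have Es' : s = A ++ x :: y :: B by rewrite Es EA M0.
    rewrite Es' in Us.
    have [i1 i2] := idx2 Us.
    by rewrite -Es /seq_adj Es' i1 i2 !mem_cat !inE !eqxx !orbT.
case/and3P => _ _ /orP[] /eqP E.
- have := (pathP x1 Ps) (index y s); rewrite index_mem => /(_ ys).
  by rewrite (nth_index _ ys) E /= (nth_index _ xs).
- have := (pathP x1 Ps) (index x s); rewrite index_mem => /(_ xs).
  by rewrite (nth_index _ xs) E /= (nth_index _ ys) esym.
Qed.

Lemma main_sec : is_path_between e H v1 v2.
Proof.
have [s G] := good_ex.
have [t Et] := good_head G.
have [Lv2 _] := good_last G.
have /and5P[_ Us _ ns _] := G.
exists s; split => //.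
- by move=> z; apply/idP/idP; [apply: good_sub | apply: cover].
- by move: Lv2; rewrite Et.
- by move=> x y xH yH; apply: adj.
Qed.

End Main2.
End Aux.

Theorem mainTheorem10 (T : finType) (e : rel T) (C : seq T)
    (x1 x2 : T) (H : {set T}) (v1 v2 : T) :
  symmetric e -> irreflexive e ->
  in_Gstar e -> two_connected e ->
  longest_odd_cycle e C -> 5 <= size C ->
  (exists v : T, v \notin C) ->
  x1 \in C -> x2 \in C -> e x1 x2 ->
  (forall v w, v \notin C -> w \in C -> touches e C v w <-> (w = x1 \/ w = x2)) ->
  component_off e C H ->
  v1 \in H -> e x1 v1 -> (forall u, u \in H -> e x1 u -> u = v1) ->
  v2 \in H -> e x2 v2 -> (forall u, u \in H -> e x2 u -> u = v2) ->
  is_path_between e H v1 v2.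
Proof.
move=> esym eirr Gs tc lC _ _ x1C x2C e12 Ht Hc v1H e1 u1 v2H e2 u2.
exact: (@Aux.main_sec T e C x1 x2 H v1 v2 esym eirr Gs lC x1C x2C e12 Ht Hc tc v1H e1 u1 v2H e2 u2).
Qed.
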